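(* Let $n\ge0$ be an integer, $\omega\in\mathbb{R}$ and $\theta_0\in\mathbb{T}$, and write $\theta_j=\theta_0+j\omega$. Suppose that for each $0\le k\le n$ we are given $\Sigma_k\subset\mathbb{T}$ such that $(\Sigma_k,\theta_0)$ is an $(r_k,l_k,a_k)$-system. Then for every integer $t>0$, $$\frac{|\{0\le j<t:\theta_j\in\bigcup_{k=0}^n\Sigma_k\}|}{t}\le\sum_{k=0}^n\Big(\frac{l_k}{t}+\frac{l_k}{r_k+l_k}\Big)$$ and $$\frac{|\{0\le j<t:\theta_j\in\bigcup_{k=0}^n\Sigma_k\}|}{t}\le\sum_{k=0}^n\frac{l_k}{m_k+l_k},\qquad m_k=\min\{a_k,r_k\}.$$
   Context: Fix $\Sigma\subset\mathbb{T}$ and the orbit $\theta_j=\theta_0+j\omega$, $j\in\mathbb{Z}$. The set $\Sigma$ has minimal return time $r>0$ if whenever an orbit leaves $\Sigma$ it does not return for at least $r$ iterates, i.e. every maximal block of consecutive iterates outside $\Sigma$ lying between two visits to $\Sigma$ has length at least $r$. It has maximal confinement time $l>0$ if every block of consecutive iterates $\theta_i,\theta_{i+1},\dots$ all lying in $\Sigma$ has length at most $l$. The point $\theta_0$ has accumulation time $a\ge0$ with respect to $\Sigma$ if $\theta_i\notin\Sigma$ for all $0\le i<a$. If these hold, $(\Sigma,\theta_0)$ is called an $(r,l,a)$-system. *)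

(* Defs.v *)
From Stdlib Require Import Reals ZArith Arith Lia ClassicalEpsilon.
Open Scope R_scope.

(* The torus T = R/Z is represented by the fundamental domain [0,1):
   tproj x is the representative of x mod 1 in [0,1). A subset of T is a
   predicate on R (only its values on [0,1) matter). *)
Definition tproj (x : R) : R := x - IZR (Int_part x).

Definition orbit (theta0 omega : R) (j : Z) : R := tproj (theta0 + IZR j * omega).

Definition in_orb (Sigma : R -> Prop) (theta0 omega : R) (j : Z) : Prop :=
  Sigma (orbit theta0 omega j).

Definition min_return_time (Sigma : R -> Prop) (theta0 omega : R) (r : nat) : Prop :=
  forall i k : Z, (i + 1 < k)%Z ->
    in_orb Sigma theta0 omega i -> in_orb Sigma theta0 omega k ->
    (forall m : Z, (i < m < k)%Z -> ~ in_orb Sigma theta0 omega m) ->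
    (Z.of_nat r <= k - i - 1)%Z.

Definition max_confinement_time (Sigma : R -> Prop) (theta0 omega : R) (l : nat) : Prop :=
  forall (i : Z) (len : nat),
    (forall m : Z, (i <= m < i + Z.of_nat len)%Z -> in_orb Sigma theta0 omega m) ->
    (len <= l)%nat.

Definition accumulation_time (Sigma : R -> Prop) (theta0 omega : R) (a : nat) : Prop :=
  forall i : nat, (i < a)%nat -> ~ in_orb Sigma theta0 omega (Z.of_nat i).

Definition rla_system (Sigma : R -> Prop) (theta0 omega : R) (r l a : nat) : Prop :=
  (0 < r)%nat /\ (0 < l)%nat /\
  min_return_time Sigma theta0 omega r /\
  max_confinement_time Sigma theta0 omega l /\
  accumulation_time Sigma theta0 omega a.

Fixpoint count_union (n : nat) (Sigma : nat -> R -> Prop) (theta0 omega : R) (t : nat) : nat :=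
  match t with
  | O => O
  | S t' => (count_union n Sigma theta0 omega t' +
            (if excluded_middle_informative
                  (exists k : nat, (k <= n)%nat /\ in_orb (Sigma k) theta0 omega (Z.of_nat t'))
             then 1 else 0))%nat
  end.

(* Main.v *)
Require Import Defs.
From Stdlib Require Import Reals ZArith Arith Lia Lra ClassicalEpsilon.
Open Scope R_scope.

Section Single.
Variable P : nat -> Prop.

Definition ind (j : nat) : nat := if excluded_middle_informative (P j) then 1%nat else 0%nat.
Fixpoint cnt (t : nat) : nat := match t with O => O | S t' => (cnt t' + ind t')%nat end.
Fixpoint run (t : nat) : nat := match t with O => O | S t' =>
  if excluded_middle_informative (P t') then S (run t') else O end.
Fixpoint gap (t : nat) : nat := match t with O => O | S t' =>
  if excluded_middle_informative (P t') then O else S (gap t') end.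

Lemma run_le t : (run t <= t)%nat.
Proof. induction t; simpl; [lia|]. destruct excluded_middle_informative; lia. Qed.
Lemma gap_le t : (gap t <= t)%nat.
Proof. induction t; simpl; [lia|]. destruct excluded_middle_informative; lia. Qed.

Lemma run_in t : forall j, (t - run t <= j < t)%nat -> P j.
Proof.
  induction t; simpl; intros j Hj; [lia|].
  destruct excluded_middle_informative as [Hp|Hp].
  - destruct (Nat.eq_dec j t) as [->|Hne]; auto. apply IHt. lia.
  - lia.
Qed.

Lemma gap_out t : forall j, (t - gap t <= j < t)%nat -> ~ P j.
Proof.
  induction t; simpl; intros j Hj; [lia|].
  destruct excluded_middle_informative as [Hp|Hp].
  - lia.
  - destruct (Nat.eq_dec j t) as [->|Hne]; auto. apply IHt. lia.
Qed.

Lemma gap_hit t : (gap t < t)%nat -> P (t - 1 - gap t).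
Proof.
  induction t; simpl; intros H; [lia|].
  destruct excluded_middle_informative as [Hp|Hp].
  - replace (t - 0 - 0)%nat with t by lia. auto.
  - replace (t - 0 - S (gap t))%nat with (t - 1 - gap t)%nat by lia. apply IHt. lia.
Qed.

Lemma cnt_zero t : (forall j, (j < t)%nat -> ~ P j) -> cnt t = 0%nat.
Proof.
  induction t; simpl; intros H; auto.
  rewrite IHt by (intros; apply H; lia). unfold ind.
  destruct excluded_middle_informative as [Hp|Hp]; auto. exfalso; apply (H t); auto.
Qed.

Variables (l m r K : nat).
Hypothesis Hconf : forall i len, (forall j, (i <= j < i + len)%nat -> P j) -> (len <= l)%nat.
Hypothesis Hret : forall i k, (i + 1 < k)%nat -> P i -> P k ->
  (forall j, (i < j < k)%nat -> ~ P j) -> (r <= k - i - 1)%nat.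
Hypothesis Hfirst : forall t, P t -> (forall j, (j < t)%nat -> ~ P j) -> (l * m <= K + l * t)%nat.
Hypothesis Hmr : (m <= r)%nat.
Hypothesis Hl0 : (0 < l)%nat.

Definition Inv t :=
  ((0 < t)%nat /\ P (t - 1)%nat -> ((l + m) * cnt t + m * (l - run t) <= l * t + K)%nat) /\
  (~ ((0 < t)%nat /\ P (t - 1)%nat) -> ((l + m) * cnt t + l * Nat.min (gap t) m <= l * t + K)%nat).

Lemma inv_all t : Inv t.
Proof.
  induction t.
  - split; intros; simpl; lia.
  - destruct IHt as [I1 I2].
    assert (Hrs : forall u, (run u <= l)%nat).
    { intros u. apply (Hconf (u - run u)). intros j Hj. apply (run_in u).
      pose proof (run_le u). lia. }
    unfold Inv. simpl cnt. simpl run. simpl gap. unfold ind.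
    replace (S t - 1)%nat with t by lia.
    destruct excluded_middle_informative as [Hp|Hp].
    + split; [intros _|intros H; exfalso; apply H; split; [lia|auto]].
      destruct (excluded_middle_informative ((0 < t)%nat /\ P (t - 1)%nat)) as [Hb|Hb].
      * specialize (I1 Hb). pose proof (Hrs (S t)) as Hs. simpl in Hs.
        destruct excluded_middle_informative; [|contradiction].
        nia.
      * specialize (I2 Hb).
        assert (Hr0 : run t = 0%nat).
        { destruct t; simpl; auto. destruct excluded_middle_informative; auto.
          exfalso; apply Hb; split; [lia|]. replace (S t - 1)%nat with t by lia; auto. }
        rewrite Hr0.
        pose proof (gap_le t) as Hgl.
        destruct (Nat.eq_dec (gap t) t) as [Hg|Hg].
        -- assert (Hall : forall j, (j < t)%nat -> ~ P j).
           { intros j Hj. apply (gap_out t). lia. }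
           rewrite (cnt_zero t Hall). specialize (Hfirst t Hp Hall). destruct l; [lia|]. replace (S n - 1)%nat with n by lia. nia.
        -- assert (Hh := gap_hit t ltac:(lia)).
           assert (Hg1 : (1 <= gap t)%nat).
           { destruct (gap t) eqn:E; [|lia]. exfalso. apply Hb. split; [lia|].
             replace (t-1)%nat with (t-1-0)%nat by lia. auto. }
           assert (Hrr := Hret (t - 1 - gap t) t ltac:(lia) Hh Hp).
           assert (r <= gap t)%nat.
           { replace (gap t) with (t - (t - 1 - gap t) - 1)%nat by lia. apply Hrr.
             intros j Hj. apply (gap_out t). lia. }
           rewrite Nat.min_r in I2 by lia. nia.
    + split; [intros [_ H]; contradiction|intros _].
      destruct (excluded_middle_informative ((0 < t)%nat /\ P (t - 1)%nat)) as [Hb|Hb].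
      * specialize (I1 Hb).
        assert (Hg0 : gap t = 0%nat).
        { destruct t; simpl; auto. destruct excluded_middle_informative; auto.
          exfalso. destruct Hb as [_ Hb]. replace (S t - 1)%nat with t in Hb by lia. auto. }
        rewrite Hg0. assert (Nat.min 1 m <= 1)%nat by lia. nia.
      * specialize (I2 Hb).
        assert (Nat.min (S (gap t)) m <= Nat.min (gap t) m + 1)%nat by lia. nia.
Qed.

Lemma cnt_bound t : ((l + m) * cnt t <= l * t + K)%nat.
Proof.
  destruct (inv_all t) as [I1 I2].
  destruct (excluded_middle_informative ((0 < t)%nat /\ P (t - 1)%nat)) as [Hb|Hb].
  - specialize (I1 Hb). lia.
  - specialize (I2 Hb). lia.
Qed.
End Single.

Lemma single_le_sum (f : nat -> R) n k : (forall i, 0 <= f i) -> (k <= n)%nat -> f k <= sum_f_R0 f n.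
Proof.
  intros Hf; induction n; intros Hk.
  - replace k with 0%nat by lia. simpl. lra.
  - simpl. destruct (Nat.eq_dec k (S n)) as [->|Hne].
    + pose proof (cond_pos_sum f n Hf). lra.
    + pose proof (IHn ltac:(lia)). pose proof (Hf (S n)). lra.
Qed.

Lemma sum_div (f : nat -> R) c n : sum_f_R0 (fun k => f k / c) n = sum_f_R0 f n / c.
Proof. induction n; simpl; auto. rewrite IHn. unfold Rdiv. ring. Qed.

Lemma union_le n Sigma theta0 omega t :
  INR (count_union n Sigma theta0 omega t) <=
  sum_f_R0 (fun k => INR (cnt (fun j => in_orb (Sigma k) theta0 omega (Z.of_nat j)) t)) n.
Proof.
  induction t; simpl.
  - clear. induction n; simpl; lra.
  - rewrite plus_INR.
    erewrite sum_eq with (Bn := fun k =>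
      INR (cnt (fun j => in_orb (Sigma k) theta0 omega (Z.of_nat j)) t) +
      INR (ind (fun j => in_orb (Sigma k) theta0 omega (Z.of_nat j)) t))
      by (intros; simpl; apply plus_INR).
    rewrite sum_plus.
    enough (INR (if excluded_middle_informative
      (exists k : nat, (k <= n)%nat /\ in_orb (Sigma k) theta0 omega (Z.of_nat t)) then 1%nat else 0%nat)
      <= sum_f_R0 (fun k => INR (ind (fun j => in_orb (Sigma k) theta0 omega (Z.of_nat j)) t)) n) by lra.
    destruct excluded_middle_informative as [[k [Hk Hin]]|_].
    + eapply Rle_trans; [|apply (single_le_sum _ n k); [intros; apply pos_INR|exact Hk]].
      unfold ind. destruct excluded_middle_informative; [simpl; lra|contradiction].
    + simpl. apply cond_pos_sum. intros; apply pos_INR.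
Qed.

Theorem lemmaB1 (n : nat) (omega theta0 : R) (Sigma : nat -> R -> Prop)
  (r l a : nat -> nat)
  (Hsys : forall k : nat, (k <= n)%nat -> rla_system (Sigma k) theta0 omega (r k) (l k) (a k)) :
  forall t : nat, (0 < t)%nat ->
    INR (count_union n Sigma theta0 omega t) / INR t
      <= sum_f_R0 (fun k => INR (l k) / INR t + INR (l k) / INR (r k + l k)) n
    /\
    INR (count_union n Sigma theta0 omega t) / INR t
      <= sum_f_R0 (fun k => INR (l k) / INR (Nat.min (a k) (r k) + l k)) n.
Proof.
  intros t Ht.
  assert (Htr : 0 < INR t) by (apply lt_0_INR; lia).
  pose proof (union_le n Sigma theta0 omega t) as HU.
  assert (HU' : INR (count_union n Sigma theta0 omega t) / INR t <=
     sum_f_R0 (fun k => INR (cnt (fun j => in_orb (Sigma k) theta0 omega (Z.of_nat j)) t) / INR t) n).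
  { rewrite sum_div. unfold Rdiv. apply Rmult_le_compat_r; [left; apply Rinv_0_lt_compat; lra|exact HU]. }
  assert (Hk : forall k, (k <= n)%nat ->
    let P := fun j => in_orb (Sigma k) theta0 omega (Z.of_nat j) in
    (forall i len, (forall j, (i <= j < i + len)%nat -> P j) -> (len <= l k)%nat) /\
    (forall i k', (i + 1 < k')%nat -> P i -> P k' ->
       (forall j, (i < j < k')%nat -> ~ P j) -> (r k <= k' - i - 1)%nat) /\
    (forall j, P j -> (a k <= j)%nat) /\ (0 < l k)%nat /\ (0 < r k)%nat).
  { intros k Hkn P. destruct (Hsys k Hkn) as (Hr & Hl & Hmr & Hmc & Hat). repeat split; auto.
    - intros i len H. apply (Hmc (Z.of_nat i) len). intros z Hz.
      replace z with (Z.of_nat (Z.to_nat z)) by lia. apply H. lia.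
    - intros i k' H1 H2 H3 H4.
      assert (Hz := Hmr (Z.of_nat i) (Z.of_nat k') ltac:(lia) H2 H3).
      assert (Hz' : (Z.of_nat (r k) <= Z.of_nat k' - Z.of_nat i - 1)%Z).
      { apply Hz. intros z Hz1. replace z with (Z.of_nat (Z.to_nat z)) by lia. apply H4. lia. }
      lia.
    - intros j Hj. destruct (Nat.lt_ge_cases j (a k)); auto. exfalso. apply (Hat j); auto. }
  split.
  - eapply Rle_trans; [exact HU'|]. apply sum_Rle. intros k Hkn.
    destruct (Hk k Hkn) as (H1 & H2 & H3 & H4 & H5).
    pose proof (cnt_bound _ (l k) (r k) (r k) (r k * l k) H1 H2
      ltac:(intros; nia) ltac:(lia) H4 t) as B.
    set (c := cnt (fun j => in_orb (Sigma k) theta0 omega (Z.of_nat j)) t) in *.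
    apply le_INR in B. rewrite !plus_INR, !mult_INR, plus_INR in B.
    rewrite plus_INR.
    assert (0 < INR (r k)) by (apply lt_0_INR; lia).
    assert (0 < INR (l k)) by (apply lt_0_INR; lia).
    assert (E : INR (l k) / INR t + INR (l k) / (INR (r k) + INR (l k)) - INR c / INR t =
      (INR (l k) * (INR (r k) + INR (l k)) + INR (l k) * INR t - INR c * (INR (r k) + INR (l k)))
      / (INR t * (INR (r k) + INR (l k)))) by (field; lra).
    assert (0 <= (INR (l k) * (INR (r k) + INR (l k)) + INR (l k) * INR t - INR c * (INR (r k) + INR (l k)))
      / (INR t * (INR (r k) + INR (l k)))).
    { unfold Rdiv. apply Rmult_le_pos; [nra|]. left. apply Rinv_0_lt_compat. nra. }
    lra.
  - eapply Rle_trans; [exact HU'|]. apply sum_Rle. intros k Hkn.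
    destruct (Hk k Hkn) as (H1 & H2 & H3 & H4 & H5).
    pose proof (cnt_bound _ (l k) (Nat.min (a k) (r k)) (r k) 0 H1 H2
      ltac:(intros tt Ht1 _; specialize (H3 tt Ht1); nia) ltac:(lia) H4 t) as B.
    set (c := cnt (fun j => in_orb (Sigma k) theta0 omega (Z.of_nat j)) t) in *.
    set (mm := Nat.min (a k) (r k)) in *.
    apply le_INR in B. rewrite !plus_INR, !mult_INR in B. simpl INR in B.
    rewrite plus_INR.
    assert (0 <= INR mm) by apply pos_INR.
    assert (0 < INR (l k)) by (apply lt_0_INR; lia).
    assert (E : INR (l k) / (INR mm + INR (l k)) - INR c / INR t =
      (INR (l k) * INR t - INR c * (INR mm + INR (l k)))
      / (INR t * (INR mm + INR (l k)))) by (field; lra).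
    assert (0 <= (INR (l k) * INR t - INR c * (INR mm + INR (l k)))
      / (INR t * (INR mm + INR (l k)))).
    { unfold Rdiv. apply Rmult_le_pos; [rewrite plus_INR in B; lra|]. left. apply Rinv_0_lt_compat. nra. }
    lra.
Qed.
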